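(* Let $k,n\ge1$, $m=kn-1$, and let $\varphi\in C^\infty(\mathbb P_m\mathbb C)$ be $g$-admissible and $G_{n,k}$-invariant with $\sup_{\mathbb P_m\mathbb C}\varphi=0$. Then $(\varphi-\psi)([1,\dots,1])\ge0$.
   Context: Homogeneous coordinates on $\mathbb P_m\mathbb C$, $m=kn-1$, are written $[z_0,\dots,z_m]=[Z_0,\dots,Z_{k-1}]$ with blocks $Z_h=(z_{hn},\dots,z_{(h+1)n-1})$. The metric $g$ has components $g_{\lambda\bar\mu}=a_m\,\partial^2\ln(1+|z_1|^2+\cdots+|z_m|^2)/\partial z_\lambda\partial\bar z_\mu$ in the chart $\{z_0=1\}$, for a fixed $a_m>0$. $\varphi$ is $g$-admissible if $g_{\lambda\bar\mu}+\partial^2\varphi/\partial z_\lambda\partial\bar z_\mu$ is positive definite everywhere. $G_{n,k}$ is the automorphism group generated by swaps of two blocks $Z_i,Z_j$, multiplication of a single coordinate $z_p$ by $e^{i\theta}$, and transpositions of two coordinates in the same block. $\psi([z_0,\dots,z_m])=\ln\big((|z_0|\cdots|z_m|)^{2a_m/(m+1)}/(|z_0|^2+\cdots+|z_m|^2)^{a_m}\big)$, so that $\psi([1,\dots,1])=-a_m\ln(m+1)$. *)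

(* Defs.v *)
From HB Require Import structures.
From mathcomp Require Import all_boot all_order all_algebra.
From mathcomp Require Import all_classical all_reals all_analysis.
From mathcomp Require Import all_fingroup complex zify.
Import Order.TTheory GRing.Theory Num.Theory numFieldNormedType.Exports.

Set Implicit Arguments.
Unset Strict Implicit.
Unset Printing Implicit Defensive.

Local Open Scope ring_scope.
Local Open Scope complex_scope.

Section Defs.
Variable R : realType.
Local Notation C := R[i].

Definition abs2 (z : C) : R := (complex.Re z) ^+ 2 + (complex.Im z) ^+ 2.
Definition cabs (z : C) : R := Num.sqrt (abs2 z).

Definition iterD {V : normedModType R} (vs : seq V) (f : V -> R) : V -> R :=
  foldr (fun v g => fun x => derive g x v) f vs.

Definition smooth {V : normedModType R} (f : V -> R) : Prop :=
  forall vs : seq V, continuous (iterD vs f) /\ forall x v, derivable (iterD vs f) x v.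

Definition toC (M : nat) (xy : 'rV[R]_M * 'rV[R]_M) : 'rV[C]_M :=
  \row_i ((xy.1 0 i) +i* (xy.2 0 i)).

Definition ex (M : nat) (i : 'I_M) : 'rV[R]_M * 'rV[R]_M := (delta_mx 0 i, 0).
Definition ey (M : nat) (i : 'I_M) : 'rV[R]_M * 'rV[R]_M := (0, delta_mx 0 i).

Definition D2 (M : nat) (F : 'rV[R]_M * 'rV[R]_M -> R) (u v : 'rV[R]_M * 'rV[R]_M) x : R :=
  derive (fun y => derive F y v) x u.

(* complex Hessian  (d^2 F / dz_l d\bar z_m)_{l,m}  via the Wirtinger operators
   d/dz = (d/dx - i d/dy)/2,  d/d\bar z = (d/dx + i d/dy)/2 *)
Definition cplx_hessian (M : nat) (F : 'rV[R]_M * 'rV[R]_M -> R) xy : 'M[C]_M :=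
  \matrix_(l, m)
    (((D2 F (ex l) (ex m) xy + D2 F (ey l) (ey m) xy) / 4%:R) +i*
     ((D2 F (ex l) (ey m) xy - D2 F (ey l) (ex m) xy) / 4%:R)).

Definition posdef (M : nat) (H : 'M[C]_M) : Prop :=
  forall v : 'rV[C]_M, v != 0 ->
    0 < \sum_(l < M) \sum_(m < M) H l m * v 0 l * (v 0 m)^*.

(* A function on P_m C is a function Phi on C^N that is invariant under
   nonzero scalings (its value at 0 is irrelevant). *)
Definition homogeneous0 (N : nat) (Phi : 'rV[C]_N -> R) : Prop :=
  forall (c : C) (z : 'rV[C]_N), c != 0 -> Phi (c *: z) = Phi z.

(* the standard affine chart {z_j = 1}: the coordinates other than z_j *)
Definition chart (N : nat) (j : 'I_N) (w : 'rV[C]_N.-1) : 'rV[C]_N :=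
  \row_p (if unlift j p is Some i then w 0 i else 1).

Definition phi_loc (N : nat) (Phi : 'rV[C]_N -> R) (j : 'I_N) :
  'rV[R]_N.-1 * 'rV[R]_N.-1 -> R :=
  fun xy => Phi (chart j (toC xy)).

(* local potential of g + dd^c phi in the chart {z_j = 1}:
   a * ln(1 + |w_1|^2 + ... + |w_m|^2) + phi *)
Definition pot_loc (N : nat) (a : R) (Phi : 'rV[C]_N -> R) (j : 'I_N) :
  'rV[R]_N.-1 * 'rV[R]_N.-1 -> R :=
  fun xy => a * ln (1 + \sum_(i < N.-1) abs2 (toC xy 0 i)) + phi_loc Phi j xy.

Definition smooth_on_P (N : nat) (Phi : 'rV[C]_N -> R) : Prop :=
  forall j : 'I_N, smooth (phi_loc Phi j).

(* g-admissible: (g_{l \bar m} + d^2 phi/dz_l d\bar z_m) positive definite everywhere,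
   i.e. at every point of every standard affine chart *)
Definition admissible (N : nat) (a : R) (Phi : 'rV[C]_N -> R) : Prop :=
  forall (j : 'I_N) xy, posdef (cplx_hessian (pot_loc a Phi j) xy).

Definition bswap_nat (n : nat) (i j : nat) (p : nat) : nat :=
  (if p %/ n == i then j * n + p %% n
  else if p %/ n == j then i * n + p %% n else p)%N.

Lemma bswap_nat_lt (k n : nat) (i j : 'I_k) (p : 'I_(k * n)) :
  (bswap_nat n i j p < k * n)%N.
Proof.
have lt_pkn := ltn_ord p.
move: (nat_of_ord p) lt_pkn => {}p lt_pkn.
have n0 : (0 < n)%N by move: lt_pkn; case: (posnP n) => [->|//]; rewrite muln0.
have aux (h : 'I_k) : (h * n + p %% n < k * n)%N.
  apply: (@leq_trans (h * n + n)%N); first by rewrite ltn_add2l ltn_pmod.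
  by rewrite -mulSnr leq_mul2r ltn_ord orbT.
rewrite /bswap_nat; case: ifP => _; first exact: aux.
by case: ifP => _; [exact: aux | exact: lt_pkn].
Qed.

(* the permutation of indices swapping blocks Z_i and Z_j *)
Definition bswap_idx (k n : nat) (i j : 'I_k) (p : 'I_(k * n)) : 'I_(k * n) :=
  Ordinal (bswap_nat_lt i j p).

Definition bswap_act (k n : nat) (i j : 'I_k) (z : 'rV[C]_(k * n)) : 'rV[C]_(k * n) :=
  \row_p z 0 (bswap_idx i j p).

Definition rot_act (N : nat) (p : 'I_N) (theta : R) (z : 'rV[C]_N) : 'rV[C]_N :=
  \row_q (if q == p then (cos theta +i* sin theta) * z 0 q else z 0 q).

Definition transp_act (N : nat) (p q : 'I_N) (z : 'rV[C]_N) : 'rV[C]_N :=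
  \row_r z 0 (tperm p q r).

(* G_{n,k}: the group generated by the above (each generator's inverse is again a
   generator, so the generated group is the closure under composition) *)
Inductive Gnk (k n : nat) : ('rV[C]_(k * n) -> 'rV[C]_(k * n)) -> Prop :=
| Gnk_id : @Gnk k n id
| Gnk_bswap (i j : 'I_k) : @Gnk k n (bswap_act i j)
| Gnk_rot (p : 'I_(k * n)) (theta : R) : @Gnk k n (rot_act p theta)
| Gnk_transp (p q : 'I_(k * n)) : (p %/ n)%N = (q %/ n)%N -> @Gnk k n (transp_act p q)
| Gnk_comp f g : @Gnk k n f -> @Gnk k n g -> @Gnk k n (f \o g).

Definition Gnk_invariant (k n : nat) (Phi : 'rV[C]_(k * n) -> R) : Prop :=
  forall f, @Gnk k n f -> forall z, Phi (f z) = Phi z.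

Definition psi (N : nat) (a : R) (z : 'rV[C]_N) : R :=
  ln ((\prod_(p < N) cabs (z 0 p)) `^ (2 * a / N%:R)
      / (\sum_(p < N) abs2 (z 0 p)) `^ a).

Definition onesC (N : nat) : 'rV[C]_N := \row_p 1.

End Defs.

(* Main.v *)
Require Import Defs.
From HB Require Import structures.
From mathcomp Require Import all_boot all_order all_algebra.
From mathcomp Require Import all_classical all_reals all_analysis.
From mathcomp Require Import complex.
From mathcomp Require Import ring lra.
Import Order.TTheory GRing.Theory Num.Theory numFieldNormedType.Exports.
Local Open Scope ring_scope.
Local Open Scope classical_set_scope.
Local Open Scope complex_scope.

Section Aux.
Variable R : realType.

Lemma d2_max (h : R -> R) (x0 d : R) : 0 < d ->
  (forall t, `|t - x0| < d -> h t <= h x0) ->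
  (forall t, derivable h t 1) ->
  derivable (fun t => derive h t 1) x0 1 ->
  derive (fun t => derive h t 1) x0 1 <= 0.
Proof.
move=> d0 hmax hd hd2.
have h10 : derive h x0 1 = 0.
  have : is_derive x0 1 h 0.
    apply: (@derive1_at_max _ h (x0 - d) (x0 + d) x0).
    - by rewrite lerBlDr -addrA lerDl ltW // addr_gt0.
    - by move=> t _; exact: hd.
    - by rewrite in_itv /=; apply/andP; split; lra.
    move=> t; rewrite in_itv /= => /andP[t1 t2]; apply: hmax.
    rewrite ltr_norml; apply/andP; split; lra.
  by move=> H; rewrite derive_val.
rewrite leNgt; apply/negP => c0.
set h1 := fun t => derive h t 1.
move: hd2 => /cvgr_gt /(_ _ c0) H.
case: H => e /= e0 He.
set s0 := Num.min e d / 2.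
have s00 : 0 < s0 by rewrite divr_gt0 // lt_min e0 d0.
have m1 : Num.min e d <= e by rewrite ge_min lexx.
have m2 : Num.min e d <= d by rewrite ge_min lexx orbT.
have s0e : s0 < e by rewrite /s0; lra.
have s0d : s0 < d by rewrite /s0; lra.
have pos : forall x, x \in `]x0, x0 + s0[%R -> 0 < h1 x.
  move=> x; rewrite in_itv /= => /andP[xa xb].
  have := He (x - x0); rewrite /ball_ /= sub0r normrN gtr0_norm ?subr_gt0 //.
  have xe : x - x0 < e by lra.
  move=> /(_ xe); rewrite subr_eq0 gt_eqF // => /(_ isT).
  rewrite h10 subr0 /GRing.scale /= mulr1 subrK pmulr_rgt0 // invr_gt0 subr_gt0 //.
have lt0 : x0 < x0 + s0 by lra.
have [c cin eq] := @MVT R h h1 x0 (x0 + s0) lt0 (fun x _ => derivableP (hd x))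
   (derivable_within_continuous (fun x _ => hd x)).
have := hmax (x0 + s0); rewrite addrAC subrr add0r gtr0_norm // => /(_ s0d).
have : 0 < h1 c * (x0 + s0 - x0) by rewrite mulr_gt0 ?pos //; lra.
rewrite -eq; lra.
Qed.

Lemma sqrt_le1 (u : R) : u <= 1 -> Num.sqrt u <= 1.
Proof. by move=> u1; rewrite -(sqrtr1 R) ler_sqrt. Qed.

Lemma radial_mono (g : R -> R -> R) :
  (forall x y, g x y = g (Num.sqrt (x^+2 + y^+2)) 0) ->
  (forall x y, [/\ forall t, derivable (fun s => g s y) t 1,
                   derivable (fun t => derive (fun s => g s y) t 1) x 1,
                   forall t, derivable (fun s => g x s) t 1,
                   derivable (fun t => derive (fun s => g x s) t 1) y 1 &
                   0 < derive (fun t => derive (fun s => g s y) t 1) x 1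
                     + derive (fun t => derive (fun s => g x s) t 1) y 1]) ->
  forall x y, x^+2 + y^+2 <= 1 -> g x y <= g 1 0.
Proof.
move=> grot gd.
suff key : forall r, 0 <= r <= 1 -> g r 0 <= g 1 0.
  move=> x y xy; rewrite grot; apply: key.
  by rewrite sqrtr_ge0 sqrt_le1.
move=> r /andP[r0 r1]; rewrite leNgt; apply/negP => gr.
set g0 := fun s => g s 0.
have [gd0 _ _ _ _] := gd 0 0.
have [c cin cmax] := @EVT_max R g0 0 1 ler01
  (derivable_within_continuous (fun x _ => gd0 x)).
move: cin; rewrite in_itv /= => /andP[c0 c1].
have c1' : c < 1.
  rewrite lt_neqAle c1 andbT; apply/negP => /eqP ec.
  have := cmax r; rewrite in_itv /= r0 r1 => /(_ isT).
  by rewrite ec /g0; lra.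
have [dx1 dx2 dy1 dy2 pos] := gd c 0.
have cpos : 0 < 1 - c by rewrite subr_gt0.
have Hx := @d2_max (fun s => g s 0) c (1 - c) cpos.
have Hy := @d2_max (fun s => g c s) 0 (1 - c) cpos.
have : derive (fun t => derive (fun s => g s 0) t 1) c 1 <= 0.
  suff hm : forall t, `|t - c| < 1 - c -> g t 0 <= g c 0 by exact: Hx hm dx1 dx2.
  move=> t tc.
  rewrite grot expr0n /= addr0 sqrtr_sqr.
  apply: (cmax `|t|); rewrite in_itv /= normr_ge0 /=.
  move: tc; rewrite ler_norml ltr_norml => /andP[t1 t2].
  clear -t1 t2 c0 c1'; apply/andP; split; lra.
have : derive (fun t => derive (fun s => g c s) t 1) 0 1 <= 0.
  suff hm : forall t, `|t - 0| < 1 - c -> g c t <= g c 0 by exact: Hy hm dy1 dy2.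
  move=> t tc.
  rewrite grot [in X in _ <= X]grot expr0n /= !addr0 sqrtr_sqr.
  have := cmax (Num.sqrt (c ^+ 2 + t ^+ 2)).
  rewrite in_itv /= sqrtr_ge0 sqrt_le1 /=; last first.
    move: tc; rewrite subr0 ltr_norml => /andP[t1 t2].
    have q1 : 0 < 1 - c - t by clear -t1 t2; lra.
    have q2 : 0 < 1 - c + t by clear -t1 t2; lra.
    have p1 : 0 < (1 - c - t) * (1 - c + t) by rewrite mulr_gt0.
    have p2 : 0 <= c * (1 - c) by rewrite mulr_ge0 // subr_ge0 ltW.
    have -> : c ^+ 2 + t ^+ 2 = 1 - (1 - c - t) * (1 - c + t) - 2 * (c * (1 - c)) by ring.
    clear -p1 p2; lra.
  by rewrite (ger0_norm c0) /g0; apply.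
move=> h1 h2; move: pos; rewrite ltNge => /negP; apply.
by move: (lerD h2 h1); rewrite addr0.
Qed.

Lemma line_quot (V : normedModType R) (f : V -> R) (p v : V) (t : R) :
  (fun h : R => h^-1 *: (((fun h0 : R => f (h0 *: v + p)) \o shift t) (h *: 1)
   - f (t *: v + p))) = (fun h => h^-1 *: ((f \o shift (t *: v + p)) (h *: v) - f (t *: v + p))).
Proof. by apply: funext => h /=; rewrite [h%:A]mulr1 scalerDl addrA. Qed.

Lemma derive_line (V : normedModType R) (f : V -> R) (p v : V) (t : R) :
  derive (fun h : R => f (h *: v + p)) t 1 = derive f (t *: v + p) v.
Proof. by rewrite /derive line_quot. Qed.

Lemma derivable_line (V : normedModType R) (f : V -> R) (p v : V) (t : R) :
  derivable (fun h : R => f (h *: v + p)) t 1 = derivable f (t *: v + p) v.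
Proof.
by rewrite /derivable /derive line_quot.
Qed.

Definition setc M (b : 'rV[R]_M * 'rV[R]_M) (l : 'I_M) (x y : R) : 'rV[R]_M * 'rV[R]_M :=
  (\row_i (if i == l then x else b.1 0 i), \row_i (if i == l then y else b.2 0 i)).

Arguments setc {M}.

Lemma setc_x M (b : 'rV[R]_M * 'rV[R]_M) (l : 'I_M) s y : setc b l s y = s *: ex R l + setc b l 0 y.
Proof.
rewrite /setc /ex; congr pair; apply/rowP => i; rewrite !mxE /=; case: eqP => _;
  by rewrite ?mulr1 ?mulr0 ?add0r ?addr0.
Qed.

Lemma setc_y M (b : 'rV[R]_M * 'rV[R]_M) (l : 'I_M) x s : setc b l x s = s *: ey R l + setc b l x 0.
Proof.
rewrite /setc /ey; congr pair; apply/rowP => i; rewrite !mxE /=; case: eqP => _;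
  by rewrite ?mulr1 ?mulr0 ?add0r ?addr0.
Qed.

Lemma chart_mono M (U : 'rV[R]_M * 'rV[R]_M -> R) (l : 'I_M) :
  (forall b x y, U (setc b l x y) = U (setc b l (Num.sqrt (x^+2 + y^+2)) 0)) ->
  (forall q, derivable U q (ex R l) /\ derivable (fun q => derive U q (ex R l)) q (ex R l)) ->
  (forall q, derivable U q (ey R l) /\ derivable (fun q => derive U q (ey R l)) q (ey R l)) ->
  (forall q, 0 < D2 U (ex R l) (ex R l) q + D2 U (ey R l) (ey R l) q) ->
  forall b x y, x^+2 + y^+2 <= 1 -> U (setc b l x y) <= U (setc b l 1 0).
Proof.
move=> Urot dUx dUy pos b.
apply: (radial_mono (fun x y => U (setc b l x y))); first by move=> x y; apply: Urot.
move=> x y.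
set px := setc b l 0 y; set py := setc b l x 0.
have ex1 : (fun s => U (setc b l s y)) = (fun s => U (s *: ex R l + px)).
  by apply: funext => s; rewrite -setc_x.
have ey1 : (fun s => U (setc b l x s)) = (fun s => U (s *: ey R l + py)).
  by apply: funext => s; rewrite -setc_y.
have ex2 : (fun t => derive (fun s => U (setc b l s y)) t 1)
    = (fun t => (fun q => derive U q (ex R l)) (t *: ex R l + px)).
  by apply: funext => t; rewrite ex1 derive_line.
have ey2 : (fun t => derive (fun s => U (setc b l x s)) t 1)
    = (fun t => (fun q => derive U q (ey R l)) (t *: ey R l + py)).
  by apply: funext => t; rewrite ey1 derive_line.
rewrite ex2 ey2.
rewrite (@derivable_line _ (fun q => derive U q (ex R l))).
rewrite (@derivable_line _ (fun q => derive U q (ey R l))).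
rewrite (@derive_line _ (fun q => derive U q (ex R l))).
rewrite (@derive_line _ (fun q => derive U q (ey R l))).
have hx : x *: ex R l + px = setc b l x y by rewrite /px -setc_x.
have hy : y *: ey R l + py = setc b l x y by rewrite /py -setc_y.
split.
- by move=> t; rewrite ex1 derivable_line; case: (dUx (t *: ex R l + px)).
- by case: (dUx (x *: ex R l + px)).
- by move=> t; rewrite ey1 derivable_line; case: (dUy (t *: ey R l + py)).
- by case: (dUy (y *: ey R l + py)).
- rewrite hx hy; exact: pos.
Qed.
Lemma diag_pos M (F : 'rV[R]_M * 'rV[R]_M -> R) xy (l : 'I_M) :
  posdef (cplx_hessian F xy) ->
  0 < D2 F (ex R l) (ex R l) xy + D2 F (ey R l) (ey R l) xy.
Proof.
move=> /(_ (delta_mx 0 l)).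
have nz : delta_mx 0 l != 0 :> 'rV[R[i]]_M.
  by apply/negP => /eqP/matrixP/(_ 0 l); rewrite !mxE !eqxx /= => /eqP; rewrite oner_eq0.
move=> /(_ nz).
rewrite (bigD1 l) //= [X in _ + X](@big1 _ 0) ?addr0; last first.
  move=> i il; apply: big1 => m _; rewrite !mxE (negbTE il) /= mulr0 mul0r //.
rewrite (bigD1 l) //= [X in _ + X](@big1 _ 0) ?addr0; last first.
  by move=> m ml; rewrite !mxE (negbTE ml) /= rmorph0 mulr0.
rewrite !mxE !eqxx /= rmorph1 !mulr1 ltcE /= => /andP[_].
have aux (A : R) : 0 < A / 4 -> 0 < A by move=> h; lra.
by rewrite oppr0 mulr0 subr0 mulr1; exact: aux.
Qed.


Lemma smooth2_line (V : normedModType R) (f : V -> R) (q v : V) :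
  (forall t, derivable (fun h : R => f (h *: v + q)) t 1) ->
  derivable (fun t => derive (fun h : R => f (h *: v + q)) t 1) 0 1 ->
  derivable f q v /\ derivable (fun q => derive f q v) q v.
Proof.
move=> d1 d2; split.
  by have := d1 0; rewrite derivable_line scale0r add0r.
move: d2.
have -> : (fun t => derive (fun h : R => f (h *: v + q)) t 1)
    = (fun t => (fun q => derive f q v) (t *: v + q)).
  by apply: funext => t; rewrite derive_line.
by rewrite (@derivable_line _ (fun q => derive f q v)) scale0r add0r.
Qed.

Lemma lnpoly (a : R) (p : {poly R}) : (forall h, 0 < p.[h]) ->
  (forall t, derivable (fun h => a * ln p.[h]) t 1) /\
  (forall t, derivable (fun t => derive (fun h => a * ln p.[h]) t 1) t 1).
Proof.
move=> hp.
have isp (t : R) : is_derive t 1 (horner p) (p^`().[t]).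
  apply: DeriveDef; first exact: derivable_horner.
  by rewrite -derive1E -derivE.
have isd (t : R) : is_derive t 1 (@ln R \o horner p) ((p.[t])^-1 * p^`().[t]).
  exact: (is_derive1_comp (is_derive1_ln (hp t)) (isp t)).
have ef : (fun h => a * ln p.[h]) = a *: (@ln R \o horner p) by [].
rewrite ef; split.
  by move=> t; apply: derivableZ; exact: ex_derive.
have ed : (fun t => derive (a *: (@ln R \o horner p)) t 1)
   = a *: ((fun t => (p.[t])^-1) * horner p^`()).
  apply: funext => t; rewrite deriveZ; last exact: ex_derive.
  by rewrite derive_val.
rewrite ed => t; apply: derivableZ; apply: derivableM.
  apply: derivableV; first by rewrite gt_eqF.
  exact: derivable_horner.
exact: derivable_horner.
Qed.

Definition Ssum M (q : 'rV[R]_M * 'rV[R]_M) : R := \sum_(i < M) abs2 (toC q 0 i).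
Arguments Ssum {M}.

Lemma Ssum_ge0 M (q : 'rV[R]_M * 'rV[R]_M) : 0 <= Ssum q.
Proof. by apply: sumr_ge0 => i _; rewrite /abs2 addr_ge0 // sqr_ge0. Qed.

Lemma Ssum_ex M (q : 'rV[R]_M * 'rV[R]_M) (l : 'I_M) h :
  Ssum (h *: ex R l + q) = Ssum q + h * (2 * q.1 0 l) + h ^+ 2.
Proof.
rewrite /Ssum (bigD1 l) //= [X in _ = X + _ + _](bigD1 l) //=.
have -> : \sum_(i < M | i != l) abs2 (toC (h *: ex R l + q) 0 i)
   = \sum_(i < M | i != l) abs2 (toC q 0 i).
  by apply: eq_bigr => i il; rewrite /abs2 /toC !mxE /= (negbTE il) /= !mulr0 !add0r.
rewrite /abs2 /toC !mxE /= !eqxx /=; ring.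
Qed.

Lemma Ssum_ey M (q : 'rV[R]_M * 'rV[R]_M) (l : 'I_M) h :
  Ssum (h *: ey R l + q) = Ssum q + h * (2 * q.2 0 l) + h ^+ 2.
Proof.
rewrite /Ssum (bigD1 l) //= [X in _ = X + _ + _](bigD1 l) //=.
have -> : \sum_(i < M | i != l) abs2 (toC (h *: ey R l + q) 0 i)
   = \sum_(i < M | i != l) abs2 (toC q 0 i).
  by apply: eq_bigr => i il; rewrite /abs2 /toC !mxE /= (negbTE il) /= !mulr0 !add0r.
rewrite /abs2 /toC !mxE /= !eqxx /=; ring.
Qed.

Lemma L_deriv M (a : R) (q v : 'rV[R]_M * 'rV[R]_M) c :
  (forall h, Ssum (h *: v + q) = Ssum q + h * c + h ^+ 2) ->
  derivable (fun xy => a * ln (1 + Ssum xy)) q v /\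
  derivable (fun q => derive (fun xy => a * ln (1 + Ssum xy)) q v) q v.
Proof.
move=> hS; set p : {poly R} := (1 + Ssum q)%:P + c *: 'X + 'X^2.
have ep h : p.[h] = 1 + Ssum (h *: v + q).
  by rewrite hS /p !hornerE [c * h]mulrC.
have pp h : 0 < p.[h] by rewrite ep (lt_le_trans ltr01) // lerDl Ssum_ge0.
have [d1 d2] := lnpoly a p pp.
set f := fun xy => a * ln (1 + Ssum xy).
have E : (fun h : R => f (h *: v + q)) = (fun h => a * ln p.[h]).
  by apply: funext => h; rewrite /f ep.
apply: smooth2_line; rewrite E; [exact: d1 | exact: d2].
Qed.

Lemma U_deriv N (a : R) (Phi : 'rV[R[i]]_N -> R) (j : 'I_N) (q v : 'rV[R]_N.-1 * 'rV[R]_N.-1) c :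
  smooth_on_P Phi ->
  (forall q h, Ssum (h *: v + q) = Ssum q + h * (c q) + h ^+ 2) ->
  derivable (pot_loc a Phi j) q v /\
  derivable (fun q => derive (pot_loc a Phi j) q v) q v.
Proof.
move=> sm hS.
pose L := fun xy : 'rV[R]_N.-1 * 'rV[R]_N.-1 => a * ln (1 + Ssum xy).
pose F := phi_loc Phi j.
have UE : pot_loc a Phi j = L + F by apply: funext => x.
have dL (q' : 'rV[R]_N.-1 * 'rV[R]_N.-1) := @L_deriv _ a q' v _ (hS q').
have dF (q' : 'rV[R]_N.-1 * 'rV[R]_N.-1) : derivable F q' v /\ derivable (fun q => derive F q v) q' v.
  by split; [case: (sm j [::]) => _; apply | case: (sm j [:: v]) => _; apply].
rewrite UE; split.
  by apply: derivableD; [case: (dL q) | case: (dF q)].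
have -> : (fun q => derive (L + F) q v) = (fun q => derive L q v) + (fun q => derive F q v).
  apply: funext => q' /=; rewrite deriveD //; [by case: (dL q') | by case: (dF q')].
by apply: derivableD; [case: (dL q) | case: (dF q)].
Qed.
Lemma angle (x y : R) : exists th : R,
  ((cos th +i* sin th) * (x +i* y))%C = (Num.sqrt (x ^+ 2 + y ^+ 2) +i* 0)%C.
Proof.
set r := Num.sqrt (x ^+ 2 + y ^+ 2).
have s0 : 0 <= x ^+ 2 + y ^+ 2 by rewrite addr_ge0 // sqr_ge0.
have r2 : r ^+ 2 = x ^+ 2 + y ^+ 2 by rewrite sqr_sqrtr.
have [r0|rpos] := eqVneq r 0.
  have : x ^+ 2 + y ^+ 2 = 0 by rewrite -r2 r0 expr0n.
  move=> /eqP; rewrite paddr_eq0 ?sqr_ge0 // !sqrf_eq0 => /andP[/eqP -> /eqP ->].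
  exists 0; rewrite r0 cos0 sin0 /=; congr (_ +i* _); ring.
have rgt0 : 0 < r by rewrite lt_def rpos sqrtr_ge0.
set u := x / r.
have u2 : 1 - u ^+ 2 = (`|y| / r) ^+ 2.
  rewrite /u !expr_div_n real_normK ?num_real //; apply: (mulIf (x := r ^+ 2)).
    by rewrite expf_neq0.
  rewrite mulrBl !divfK ?expf_neq0 // mul1r r2; ring.
have u1 : -1 <= u <= 1.
  have : u ^+ 2 <= 1 by rewrite -subr_ge0 u2 sqr_ge0.
  rewrite -(real_normK (num_real u)) expr_le1 // => ?; by rewrite -ler_norml.
have ss : sin (acos u) = `|y| / r.
  by rewrite sin_acos // u2 sqrtr_sqr ger0_norm // divr_ge0 // ltW.
have cs : cos (acos u) = u by rewrite acosK // in_itv /=.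
have key : forall th, cos th = u -> sin th = - y / r -> 
    ((cos th +i* sin th) * (x +i* y))%C = (r +i* 0)%C.
  move=> th -> ->; rewrite /= /u; congr (_ +i* _).
    have -> : x / r * x - - y / r * y = (x ^+ 2 + y ^+ 2) / r by field.
    by rewrite -r2 expr2 mulfK.
  by field.
have [yle|ygt] := lerP y 0.
  exists (acos u); apply: key => //; rewrite ss ler0_norm // mulNr.
exists (- acos u); apply: key; first by rewrite cosN.
by rewrite sinN ss gtr0_norm // mulNr.
Qed.

Lemma chart_rot N (j : 'I_N) (l : 'I_N.-1) (w : 'rV[R[i]]_N.-1) th :
  rot_act (lift j l) th (chart j w)
  = chart j (\row_i (if i == l then (cos th +i* sin th) * w 0 i else w 0 i)).
Proof.
apply/rowP => q; rewrite !mxE.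
case: (unliftP j q) => [i ->|->].
  by rewrite (inj_eq (@lift_inj _ j)) mxE.
by rewrite (negbTE (neq_lift j l)).
Qed.

Lemma U_rot N (a : R) (Phi : 'rV[R[i]]_N -> R) (j : 'I_N) (l : 'I_N.-1) :
  (forall p th z, Phi (rot_act p th z) = Phi z) ->
  forall b x y, pot_loc a Phi j (setc b l x y)
     = pot_loc a Phi j (setc b l (Num.sqrt (x ^+ 2 + y ^+ 2)) 0).
Proof.
move=> hrot b x y.
have s0 : 0 <= x ^+ 2 + y ^+ 2 by rewrite addr_ge0 // sqr_ge0.
rewrite /pot_loc; congr (_ * ln (1 + _) + _).
  apply: eq_bigr => i _; rewrite /abs2 /toC /setc !mxE /=.
  by case: eqP => // _; rewrite sqr_sqrtr // expr0n /= addr0.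
have [th eth] := angle x y.
rewrite /phi_loc -(hrot (lift j l) th) chart_rot; congr (Phi (chart j _)).
apply/rowP => i; rewrite /toC /setc !mxE /=.
by case: eqP => // _; rewrite eth.
Qed.

Lemma ReIm_eta (u : R[i]) : complex.Re u +i* complex.Im u = u.
Proof. by case: u. Qed.

Lemma abs2M (u v : R[i]) : abs2 (u * v) = abs2 u * abs2 v.
Proof. by case: u => a b; case: v => c d; rewrite /abs2 /=; ring. Qed.

Lemma abs2_ge0 (u : R[i]) : 0 <= abs2 u.
Proof. by rewrite /abs2 addr_ge0 // sqr_ge0. Qed.

Lemma abs2_gt0 (u : R[i]) : u != 0 -> 0 < abs2 u.
Proof.
move=> u0; rewrite lt_def abs2_ge0 andbT; apply: contra u0.
case: u => a b; rewrite /abs2 /= paddr_eq0 ?sqr_ge0 // !sqrf_eq0 => /andP[/eqP -> /eqP ->].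
by [].
Qed.

Lemma abs2_1 : abs2 (1 : R[i]) = 1.
Proof. by rewrite /abs2 /= expr1n expr0n addr0. Qed.

Lemma Ssum_ones M : Ssum ((const_mx 1, 0) : 'rV[R]_M * 'rV[R]_M) = M%:R.
Proof.
rewrite /Ssum (eq_bigr (fun _ => 1)); last by move=> i _; rewrite /abs2 /toC !mxE /= expr1n expr0n addr0.
by rewrite sumr_const card_ord.
Qed.

Lemma chart_ones N (j : 'I_N) :
  chart j (toC ((const_mx 1, 0) : 'rV[R]_N.-1 * 'rV[R]_N.-1)) = onesC R N.
Proof. by apply/rowP => q; rewrite !mxE; case: (unliftP j q) => [i _|_]; rewrite ?mxE. Qed.

Lemma final_step N (a : R) (Phi : 'rV[R[i]]_N -> R) : (0 < N)%N -> 0 < a ->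
  homogeneous0 Phi ->
  (forall j xy, (forall i, abs2 (toC xy 0 i) <= 1) ->
     pot_loc a Phi j xy <= pot_loc a Phi j (const_mx 1, 0)) ->
  forall z, z != 0 -> Phi z <= Phi (onesC R N) + a * ln N%:R.
Proof.
move=> N0 a0 hom mono z z0.
have [q0 q0z] : exists q, z 0 q != 0.
  case: (pselect (exists q, z 0 q != 0)) => // H; exfalso.
  move/negP: z0; apply; apply/eqP/rowP => q; rewrite mxE; apply/eqP.
  by apply/negPn/negP => hq; apply: H; exists q.
case: (@arg_maxP _ _ _ q0 xpredT (fun i => abs2 (z 0 i)) isT) => j _ hj.
have zj : z 0 j != 0.
  have : 0 < abs2 (z 0 j) by exact: (lt_le_trans (abs2_gt0 _ q0z) (hj q0 isT)).
  by apply: contraTneq => ->; rewrite /abs2 /= expr0n addr0 ltxx.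
set c := (z 0 j)^-1.
have c0 : c != 0 by rewrite invr_eq0.
set z' := c *: z.
have hz' : Phi z' = Phi z by apply: hom.
set xy : 'rV[R]_N.-1 * 'rV[R]_N.-1 :=
  (\row_i complex.Re (z' 0 (lift j i)), \row_i complex.Im (z' 0 (lift j i))).
have cz : chart j (toC xy) = z'.
  apply/rowP => q; rewrite !mxE; case: (unliftP j q) => [i ->|->].
    by rewrite !mxE ReIm_eta.
  by rewrite /c mulVf.
have cabs : abs2 c * abs2 (z 0 j) = 1 by rewrite -abs2M /c mulVf // abs2_1.
have xy1 : forall i, abs2 (toC xy 0 i) <= 1.
  move=> i; have -> : toC xy 0 i = z' 0 (lift j i).
    by rewrite !mxE ReIm_eta.
  rewrite /z' mxE abs2M -cabs ler_pM2l; first exact: hj.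
  exact: abs2_gt0 _ c0.
have := mono j xy xy1.
rewrite /pot_loc /phi_loc cz hz' chart_ones.
have -> : \sum_(i < N.-1) abs2 (toC ((const_mx 1, 0) : 'rV[R]_N.-1 * 'rV[R]_N.-1) 0 i) = N.-1%:R
  by exact: Ssum_ones.
have eN : (1 + N.-1%:R : R) = N%:R by rewrite addrC natr1 prednK.
rewrite eN.
have : 0 <= a * ln (1 + \sum_(i < N.-1) abs2 (toC xy 0 i)).
  apply: mulr_ge0; first exact: ltW.
  apply: ln_ge0; rewrite lerDl; exact: (Ssum_ge0 _ xy).
move: (a * ln _) (a * ln _) => A B ha hb.
rewrite addrC; apply: le_trans hb; rewrite lerDr; exact: ha.
Qed.

Lemma psi_ones N (a : R) : (0 < N)%N -> psi a (onesC R N) = - (a * ln N%:R).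
Proof.
move=> N0; rewrite /psi.
have -> : \prod_(p < N) cabs (onesC R N 0 p) = 1.
  by rewrite big1 // => p _; rewrite mxE /cabs abs2_1 sqrtr1.
have -> : \sum_(p < N) abs2 (onesC R N 0 p) = N%:R.
  by rewrite (eq_bigr (fun _ => 1)) ?sumr_const ?card_ord // => p _; rewrite mxE abs2_1.
by rewrite powR1 mul1r lnV ?ln_powR // posrE powR_gt0 // ltr0n.
Qed.

Lemma mono_all N (a : R) (Phi : 'rV[R[i]]_N -> R) :
  smooth_on_P Phi -> admissible a Phi ->
  (forall p th z, Phi (rot_act p th z) = Phi z) ->
  forall j xy, (forall i, abs2 (toC xy 0 i) <= 1) ->
     pot_loc a Phi j xy <= pot_loc a Phi j (const_mx 1, 0).
Proof.
move=> sm adm hrot j xy hxy.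
have step : forall l b x y, x ^+ 2 + y ^+ 2 <= 1 ->
    pot_loc a Phi j (setc b l x y) <= pot_loc a Phi j (setc b l 1 0).
  move=> l; apply: chart_mono.
  - exact: U_rot.
  - move=> q; apply: (@U_deriv N a Phi j q (ex R l) (fun q => 2 * q.1 0 l) sm).
    by move=> q' h; rewrite Ssum_ex.
  - move=> q; apply: (@U_deriv N a Phi j q (ey R l) (fun q => 2 * q.2 0 l) sm).
    by move=> q' h; rewrite Ssum_ey.
  - by move=> q; apply: diag_pos; apply: adm.
pose xs (s : nat) : 'rV[R]_N.-1 * 'rV[R]_N.-1 :=
  (\row_i (if (i < s)%N then 1 else xy.1 0 i), \row_i (if (i < s)%N then 0 else xy.2 0 i)).
have H : forall s, (s <= N.-1)%N -> pot_loc a Phi j xy <= pot_loc a Phi j (xs s).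
  elim => [_|s IH hs].
    have -> : xs 0%N = xy.
      by rewrite /xs [in RHS](surjective_pairing xy); congr pair; apply/rowP => i; rewrite mxE.
    exact: lexx.
  have hs' : (s < N.-1)%N by [].
  pose l := Ordinal hs'.
  have e1 : xs s = setc (xs s) l (xy.1 0 l) (xy.2 0 l).
    rewrite /setc /xs; congr pair; apply/rowP => i; rewrite !mxE;
      by case: (eqVneq i l) => [->|]; rewrite //= ltnn.
  have e2 : xs s.+1 = setc (xs s) l 1 0.
    rewrite /setc /xs; congr pair; apply/rowP => i; rewrite !mxE ltnS leq_eqVlt;
      case: (eqVneq i l) => [->|il]; rewrite /= ?eqxx //;
      by have -> : (nat_of_ord i == s) = false by apply/negbTE.
  apply: (le_trans (IH (ltnW hs))); rewrite e2 {1}e1; apply: step.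
  by have := hxy l; rewrite /abs2 /toC mxE.
have -> : ((const_mx 1, 0) : 'rV[R]_N.-1 * 'rV[R]_N.-1) = xs N.-1.
  by rewrite /xs; congr pair; apply/rowP => i; rewrite !mxE ltn_ord.
exact: H.
Qed.
End Aux.

Local Close Scope complex_scope.

(* m = k n - 1, homogeneous coordinates indexed by 'I_(k*n); a is a_m *)
Theorem lemma4 (R : realType) (k n : nat) (a : R) (Phi : 'rV[R[i]]_(k * n) -> R) :
  (1 <= k)%N -> (1 <= n)%N -> 0 < a ->
  homogeneous0 Phi ->
  smooth_on_P Phi ->
  admissible a Phi ->
  Gnk_invariant Phi ->
  sup (Phi @` [set z | z != 0]) = 0 ->
  0 <= Phi (onesC R (k * n)) - psi a (onesC R (k * n)).
Proof.
move=> hk hn ha hom sm adm inv hsup.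
have N0 : (0 < k * n)%N by rewrite muln_gt0 hk hn.
have hrot : forall p th z, Phi (rot_act p th z) = Phi z.
  by move=> p th z; apply: inv; apply: Gnk_rot.
have bound := @final_step R (k * n) a Phi N0 ha hom (@mono_all R (k * n) a Phi sm adm hrot).
rewrite psi_ones // opprK.
have ne : (Phi @` [set z | z != 0]) !=set0.
  exists (Phi (onesC R (k * n))); exists (onesC R (k * n)) => //.
  apply/negP => /eqP/rowP/(_ (Ordinal N0)); rewrite !mxE => /eqP; rewrite oner_eq0.
  by [].
rewrite -hsup; apply: ge_sup => // _ [z z0 <-]; exact: bound.
Qed.
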